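(* Let $X$ be an $n$-skeletal simplicial set. Then $\text{St}(X)$ (i.e. its underlying simplicial set) is $(n+1)$-coskeletal.
   Context: A simplicial $T$-complex is a simplicial set with marked (''thin'') simplices such that degenerate simplices are thin, every horn $\Lambda^n_k\to X$ has a unique filler with thin top simplex, and if all nondegenerate faces of a horn are thin then its composition (the $k$-th face of that filler) is thin; morphisms are thin-preserving simplicial maps. $\text{St}:\text{sSet}\to\text{sTCom}$ is the left adjoint of the forgetful functor $\text{U}_{\text{St}}$ from simplicial $T$-complexes to simplicial sets. *)

(* Defs.v *)
(** Face/degeneracy maps are indexed by [nat]; only in-range indices
    (d_i on X_(n+1) with i <= n+1, s_i on X_n with i <= n) are meaningful,
    and the simplicial identities are required exactly for those. *)
Record sSet := {
  sob :> nat -> Type;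
  face : forall n, nat -> sob (S n) -> sob n;
  degen : forall n, nat -> sob n -> sob (S n);
  dd : forall n i j (x : sob (S (S n))), i < j -> j <= S (S n) ->
         face n i (face (S n) j x) = face n (pred j) (face (S n) i x);
  ds_lt : forall n i j (x : sob (S n)), i < j -> j <= S n ->
         face (S n) i (degen (S n) j x) = degen n (pred j) (face n i x);
  ds_eq : forall n j (x : sob n), j <= n -> face n j (degen n j x) = x;
  ds_eq1 : forall n j (x : sob n), j <= n -> face n (S j) (degen n j x) = x;
  ds_gt : forall n i j (x : sob (S n)), S j < i -> i <= S (S n) ->
         face (S n) i (degen (S n) j x) = degen n j (face n (pred i) x);
  ss : forall n i j (x : sob n), i <= j -> j <= n ->
         degen (S n) i (degen n j x) = degen (S n) (S j) (degen n i x)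
}.

Arguments face {X} n i x : rename.
Arguments degen {X} n i x : rename.

Definition is_smap (X Y : sSet) (f : forall n, X n -> Y n) : Prop :=
  (forall n i (x : X (S n)), i <= S n -> f n (face n i x) = face n i (f (S n) x)) /\
  (forall n i (x : X n), i <= n -> f (S n) (degen n i x) = degen n i (f n x)).

Definition degenerate (X : sSet) n (x : X (S n)) : Prop :=
  exists i (y : X n), i <= n /\ x = degen n i y.

Definition skeletal (n : nat) (X : sSet) : Prop :=
  forall m (x : X (S m)), n < S m -> degenerate X m x.

(** A family [h : nat -> X m] indexed by [0..m+1] of m-simplices, restricted to
    indices satisfying [P], is compatible, i.e. is a map from the union of the
    corresponding faces of the boundary of Delta^(m+1) into X:
    d_i h_j = d_(j-1) h_i for i < j. *)
Definition compat (X : sSet) (P : nat -> Prop) (m : nat) : (nat -> X m) -> Prop :=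
  match m return (nat -> X m) -> Prop with
  | 0 => fun _ => True
  | S p => fun h => forall i j, i < j -> j <= S (S p) -> P i -> P j ->
             face p i (h j) = face p (pred j) (h i)
  end.

Definition fills (X : sSet) (P : nat -> Prop) m (h : nat -> X m) (x : X (S m)) : Prop :=
  forall i, i <= S m -> P i -> face m i x = h i.

(** Horn Lambda^(m+1)_k: all faces except the k-th.
    Boundary of Delta^(m+1): all faces. *)
Definition horn_idx (k : nat) : nat -> Prop := fun i => i <> k.
Definition all_idx : nat -> Prop := fun _ => True.

Definition coskeletal (m : nat) (Y : sSet) : Prop :=
  forall k (h : nat -> Y k), m < S k -> compat Y all_idx k h ->
    exists! x : Y (S k), fills Y all_idx k h x.

Record TCom := {
  tss :> sSet;
  thin : forall n, tss (S n) -> Prop;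
  thin_degen : forall n (x : tss (S n)), degenerate tss n x -> thin n x;
  thin_horn : forall m k (h : nat -> tss m), k <= S m ->
      compat tss (horn_idx k) m h ->
      exists! x : tss (S m), thin m x /\ fills tss (horn_idx k) m h x;
  thin_comp : forall m k (h : nat -> tss (S m)) (x : tss (S (S m))),
      k <= S (S m) ->
      compat tss (horn_idx k) (S m) h ->
      thin (S m) x -> fills tss (horn_idx k) (S m) h x ->
      (forall i, i <= S (S m) -> i <> k -> ~ degenerate tss m (h i) -> thin m (h i)) ->
      thin m (face (S m) k x)
}.

Definition is_tmap (X Y : TCom) (g : forall n, X n -> Y n) : Prop :=
  is_smap X Y g /\ (forall n (x : X (S n)), thin X n x -> thin Y n (g (S n) x)).

(** [S] together with the unit [eta : X -> U_St S] is the free T-complex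
    St(X) on X, i.e. it is the value of the left adjoint of U_St at X:
    every simplicial map X -> U_St Y factors uniquely through eta via a
    T-complex morphism S -> Y. *)
Definition is_St (X : sSet) (St : TCom) (eta : forall n, X n -> St n) : Prop :=
  is_smap X St eta /\
  forall (Y : TCom) (f : forall n, X n -> Y n), is_smap X Y f ->
    exists g : forall n, St n -> Y n,
      is_tmap St Y g /\ (forall n x, g n (eta n x) = f n x) /\
      (forall g' : forall n, St n -> Y n, is_tmap St Y g' ->
         (forall n x, g' n (eta n x) = f n x) -> forall n y, g' n y = g n y).

(* Main.v *)
Require Import Defs.
From Stdlib Require Import Lia PeanoNat ProofIrrelevance.

Fixpoint good (T : TCom) (n : nat) (m : nat) : T m -> Prop :=
  match m return T m -> Prop with
  | 0 => fun _ => True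
  | S m' => fun s => (n <= m' -> thin T m' s) /\
                     forall i, i <= S m' -> good T n m' (face m' i s)
  end.

Lemma good_face (T : TCom) n m (s : T (S m)) i :
  good T n (S m) s -> i <= S m -> good T n m (face m i s).
Proof. intros [_ H] Hi; apply H; auto. Qed.

Lemma good_degen (T : TCom) n : forall m (s : T m) j,
  good T n m s -> j <= m -> good T n (S m) (degen m j s).
Proof.
  induction m as [|m IH]; intros s j Hs Hj.
  - simpl. split.
    + intros; apply thin_degen; exists j, s; auto.
    + intros; exact I.
  - simpl. split.
    + intros; apply thin_degen; exists j, s; auto.
    + intros i Hi.
      destruct (Nat.lt_ge_cases i j) as [Hl|Hg].
      * rewrite ds_lt by lia. apply IH; [apply good_face; auto; lia | lia].
      * destruct (Nat.eq_dec i j) as [->|Hne].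
        { rewrite ds_eq by lia. exact Hs. }
        destruct (Nat.eq_dec i (S j)) as [->|Hne2].
        { rewrite ds_eq1 by lia. exact Hs. }
        rewrite ds_gt by lia. apply IH; [apply good_face; auto; lia | lia].
Qed.

Definition Yob (T : TCom) n m := {s : T m | good T n m s}.

Definition Yface (T : TCom) n m i (y : Yob T n (S m)) : Yob T n m :=
  exist _ (face m (Nat.min i (S m)) (proj1_sig y))
    (good_face T n m _ _ (proj2_sig y) (Nat.le_min_r _ _)).

Definition Ydegen (T : TCom) n m j (y : Yob T n m) : Yob T n (S m) :=
  exist _ (degen m (Nat.min j m) (proj1_sig y))
    (good_degen T n m _ _ (proj2_sig y) (Nat.le_min_r _ _)).

Lemma Yeq (T : TCom) n m (a b : Yob T n m) : proj1_sig a = proj1_sig b -> a = b.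
Proof.
  destruct a as [a Ha], b as [b Hb]; simpl; intros ->; f_equal; apply proof_irrelevance.
Qed.

Lemma Ydd (T : TCom) N : forall n i j (x : Yob T N (S (S n))), i < j -> j <= S (S n) ->
  Yface T N n i (Yface T N (S n) j x) = Yface T N n (pred j) (Yface T N (S n) i x).
Proof.
  intros n i j x H1 H2; apply Yeq; simpl.
  destruct j as [|j]; [lia|]; simpl pred.
  rewrite !Nat.min_l by lia. apply (dd T n i (S j)); lia.
Qed.

Lemma Yds_lt (T : TCom) N : forall n i j (x : Yob T N (S n)), i < j -> j <= S n ->
  Yface T N (S n) i (Ydegen T N (S n) j x) = Ydegen T N n (pred j) (Yface T N n i x).
Proof.
  intros n i j x H1 H2; apply Yeq; simpl.
  destruct j as [|j]; [lia|]; simpl pred.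
  rewrite !Nat.min_l by lia. apply (ds_lt T n i (S j)); lia.
Qed.

Lemma Yds_eq (T : TCom) N : forall n j (x : Yob T N n), j <= n -> Yface T N n j (Ydegen T N n j x) = x.
Proof.
  intros n j x H; apply Yeq; simpl. rewrite !Nat.min_l by lia. apply ds_eq; lia.
Qed.

Lemma Yds_eq1 (T : TCom) N : forall n j (x : Yob T N n), j <= n -> Yface T N n (S j) (Ydegen T N n j x) = x.
Proof.
  intros n j x H; apply Yeq; simpl. rewrite !Nat.min_l by lia. apply ds_eq1; lia.
Qed.

Lemma Yds_gt (T : TCom) N : forall n i j (x : Yob T N (S n)), S j < i -> i <= S (S n) ->
  Yface T N (S n) i (Ydegen T N (S n) j x) = Ydegen T N n j (Yface T N n (pred i) x).
Proof.
  intros n i j x H1 H2; apply Yeq; simpl.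
  destruct i as [|i]; [lia|]; simpl pred.
  rewrite !Nat.min_l by lia. apply (ds_gt T n (S i) j); lia.
Qed.

Lemma Yss (T : TCom) N : forall n i j (x : Yob T N n), i <= j -> j <= n ->
  Ydegen T N (S n) i (Ydegen T N n j x) = Ydegen T N (S n) (S j) (Ydegen T N n i x).
Proof.
  intros n i j x H1 H2; apply Yeq; simpl.
  rewrite !Nat.min_l by lia. apply ss; lia.
Qed.

Definition Ysset (T : TCom) N : sSet :=
  {| sob := Yob T N; face := Yface T N; degen := Ydegen T N;
     dd := Ydd T N; ds_lt := Yds_lt T N; ds_eq := Yds_eq T N;
     ds_eq1 := Yds_eq1 T N; ds_gt := Yds_gt T N; ss := Yss T N |}.

Definition Ythin (T : TCom) N m (y : Ysset T N (S m)) : Prop := thin T m (proj1_sig y).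

Lemma compat_Y (T : TCom) N P m (h : nat -> Ysset T N m) :
  compat (Ysset T N) P m h -> compat T P m (fun i => proj1_sig (h i)).
Proof.
  destruct m as [|p]; simpl; auto.
  intros Hc i j H1 H2 Pi Pj. specialize (Hc i j H1 H2 Pi Pj).
  apply (f_equal (@proj1_sig _ _)) in Hc; simpl in Hc.
  destruct j as [|j]; [lia|]; simpl pred in *.
  rewrite !Nat.min_l in Hc by lia. exact Hc.
Qed.

Lemma Ythin_degen (T : TCom) N : forall n (x : Ysset T N (S n)), degenerate (Ysset T N) n x -> Ythin T N n x.
Proof.
  intros n x [i [z [Hi ->]]]. unfold Ythin; simpl. rewrite Nat.min_l by lia.
  apply thin_degen; exists i, (proj1_sig z); auto.
Qed.

Lemma comp_good (T : TCom) N m k (h : nat -> T m) (x : T (S m)) :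
  k <= S m -> compat T (horn_idx k) m h -> thin T m x ->
  fills T (horn_idx k) m h x -> (forall i, i <= S m -> i <> k -> good T N m (h i)) ->
  good T N m (face m k x).
Proof.
  intros Hk Hc Ht Hf Hg.
  destruct m as [|p]; [exact I|].
  split.
  - intros Hn. apply (thin_comp T p k h x Hk Hc Ht Hf).
    intros i Hi Hik _. exact (proj1 (Hg i Hi Hik) Hn).
  - intros i Hi. destruct (Nat.lt_ge_cases i k) as [Hl|Hge].
    + rewrite (dd T p i k x Hl Hk). rewrite (Hf i ltac:(lia) ltac:(unfold horn_idx; lia)).
      apply good_face; [apply Hg; lia | lia].
    + assert (E := dd T p k (S i) x ltac:(lia) ltac:(lia)). simpl in E. rewrite <- E.
      rewrite (Hf (S i) ltac:(lia) ltac:(unfold horn_idx; lia)).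
      apply good_face; [apply Hg; lia | lia].
Qed.

Lemma Ythin_horn (T : TCom) N : forall m k (h : nat -> Ysset T N m), k <= S m ->
  compat (Ysset T N) (horn_idx k) m h ->
  exists! x : Ysset T N (S m), Ythin T N m x /\ fills (Ysset T N) (horn_idx k) m h x.
Proof.
  intros m k h Hk Hc.
  pose (h' := fun i => proj1_sig (h i)).
  assert (Hc' : compat T (horn_idx k) m h') by (apply compat_Y; auto).
  destruct (thin_horn T m k h' Hk Hc') as [x [[Ht Hf] Hu]].
  assert (Gx : good T N (S m) x).
  { split; [intros; exact Ht|]. intros i Hi.
    destruct (Nat.eq_dec i k) as [->|Hne].
    - apply (comp_good T N m k h' x Hk Hc' Ht Hf). intros j _ _. exact (proj2_sig (h j)).
    - rewrite (Hf i Hi Hne). exact (proj2_sig (h i)). }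
  exists (exist _ x Gx). split.
  - split; [exact Ht|]. intros i Hi Pi. apply Yeq; simpl. rewrite Nat.min_l by lia. apply Hf; auto.
  - intros y [Hty Hfy]. apply Yeq; simpl. apply Hu. split; [exact Hty|].
    intros i Hi Pi. specialize (Hfy i Hi Pi). apply (f_equal (@proj1_sig _ _)) in Hfy.
    simpl in Hfy. rewrite Nat.min_l in Hfy by lia. exact Hfy.
Qed.

Lemma Ythin_comp (T : TCom) N : forall m k (h : nat -> Ysset T N (S m)) (x : Ysset T N (S (S m))),
      k <= S (S m) ->
      compat (Ysset T N) (horn_idx k) (S m) h ->
      Ythin T N (S m) x -> fills (Ysset T N) (horn_idx k) (S m) h x ->
      (forall i, i <= S (S m) -> i <> k -> ~ degenerate (Ysset T N) m (h i) -> Ythin T N m (h i)) ->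
      Ythin T N m (face (S m) k x).
Proof.
  intros m k h x Hk Hc Ht Hf Hd. unfold Ythin; simpl. rewrite Nat.min_l by lia.
  apply (thin_comp T m k (fun i => proj1_sig (h i)) (proj1_sig x) Hk); auto.
  - apply compat_Y; auto.
  - intros i Hi Pi. specialize (Hf i Hi Pi). apply (f_equal (@proj1_sig _ _)) in Hf.
    simpl in Hf. rewrite Nat.min_l in Hf by lia. exact Hf.
  - intros i Hi Hik Hnd. apply Hd; auto. intros [j [z [Hj Ez]]]. apply Hnd.
    exists j, (proj1_sig z). split; auto. rewrite Ez; simpl. rewrite Nat.min_l by lia. reflexivity.
Qed.

Definition YT (T : TCom) N : TCom :=
  {| tss := Ysset T N; thin := Ythin T N; thin_degen := Ythin_degen T N;
     thin_horn := Ythin_horn T N; thin_comp := Ythin_comp T N |}.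

Lemma good_eta n (X : sSet) (St : TCom) (eta : forall k, X k -> St k) :
  skeletal n X -> is_smap X St eta -> forall m x, good St n m (eta m x).
Proof.
  intros Hsk [Hf Hd]. induction m as [|m IH]; intros x; [exact I|].
  split.
  - intros Hn. destruct (Hsk m x ltac:(lia)) as [i [y [Hi ->]]].
    rewrite (Hd m i y Hi). apply thin_degen. exists i, (eta m y); auto.
  - intros i Hi. rewrite <- (Hf m i x Hi). apply IH.
Qed.

Theorem mainTheorem11 : forall (n : nat) (X : sSet),
  skeletal n X ->
  forall (St : TCom) (eta : forall k, X k -> St k),
    is_St X St eta ->
    coskeletal (S n) (tss St).
Proof.
  intros n X Hsk St eta [Hsm HU].
  pose (eta' := fun m x => exist (good St n m) (eta m x) (good_eta n X St eta Hsk Hsm m x)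
                  : YT St n m).
  assert (Hsm' : is_smap X (YT St n) eta').
  { split.
    - intros m i x Hi. apply Yeq; simpl. rewrite Nat.min_l by lia. apply (proj1 Hsm); auto.
    - intros m i x Hi. apply Yeq; simpl. rewrite Nat.min_l by lia. apply (proj2 Hsm); auto. }
  assert (Hall : forall m (s : St m), good St n m s).
  { destruct (HU (YT St n) eta' Hsm') as [g [[[Hgf Hgd] Hgt] [Hge _]]].
    destruct (HU St eta Hsm) as [G [_ [_ HGu]]].
    intros m s.
    assert (E1 := HGu (fun m s => s)).
    assert (E2 := HGu (fun m s => proj1_sig (g m s))).
    assert (Hid : is_tmap St St (fun m s => s)).
    { split; [split; reflexivity|auto]. }
    assert (Hcomp : is_tmap St St (fun m s => proj1_sig (g m s))).
    { split; [split|].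
      - intros k i x Hi. simpl. rewrite (Hgf k i x Hi). simpl. rewrite Nat.min_l by lia. reflexivity.
      - intros k i x Hi. simpl. rewrite (Hgd k i x Hi). simpl. rewrite Nat.min_l by lia. reflexivity.
      - intros k x Hx. exact (Hgt k x Hx). }
    specialize (E1 Hid (fun _ _ => eq_refl) m s).
    specialize (E2 Hcomp (fun k x => f_equal (@proj1_sig _ _) (Hge k x)) m s).
    simpl in E1, E2. rewrite E1, <- E2. exact (proj2_sig (g m s)). }
  assert (Hthin : forall q (t : St (S q)), n <= q -> thin St q t).
  { intros q t Hq. exact (proj1 (Hall (S q) t) Hq). }
  intros k h Hk Hc.
  assert (Hch : compat St (horn_idx 0) k h).
  { destruct k as [|p]; simpl in *; auto. intros i j H1 H2 _ _. apply Hc; auto; exact I. }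
  destruct (thin_horn St k 0 h ltac:(lia) Hch) as [x [[Ht Hf] Hu]].
  exists x. split.
  - intros i Hi _. destruct (Nat.eq_dec i 0) as [->|Hne]; [|apply Hf; auto].
    destruct k as [|k']; [lia|].
    pose (h' := fun i => face k' i (h 0)).
    assert (Hc' : compat St (horn_idx 0) k' h').
    { destruct k' as [|p]; simpl; auto. intros a b H1 H2 _ _. unfold h'. apply dd; auto. }
    destruct (thin_horn St k' 0 h' ltac:(lia) Hc') as [y [_ Hyu]].
    transitivity y; [symmetry|]; apply Hyu; split.
    + apply Hthin; lia.
    + intros j Hj Pj. unfold h'. destruct j as [|j]; [unfold horn_idx in Pj; lia|].
      assert (E := dd St k' 0 (S (S j)) x ltac:(lia) ltac:(lia)). simpl in E.
      rewrite <- E. rewrite (Hf (S (S j)) ltac:(lia) ltac:(unfold horn_idx; lia)).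
      simpl in Hc. assert (E2 := Hc 0 (S (S j)) ltac:(lia) ltac:(lia) I I). simpl in E2. exact E2.
    + apply Hthin; lia.
    + intros j Hj Pj. reflexivity.
  - intros y Hy. apply Hu. split.
    + apply Hthin; lia.
    + intros i Hi _. apply Hy; auto. exact I.
Qed.
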